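(* Let $\{x_i,v_i\}_{i\in[N]}$ be the global solution of the delayed Cucker–Smale system described in the context, let $\beta>0$ and \[ G(t):=d_v(t)+\beta\int_{\max\{0,t-2\tau\}}^t e^{-(t-s)}\int_s^t\max_{i\in[N]}|\dot v_i(r)|\,\mathrm dr\,\mathrm ds,\qquad t\ge0. \] Then for all $i,j\in[N]$ and $t\ge2\tau$, \[ |x_j(t-\tau)-x_i(t-\sigma)|\le|x_j(\tau)-x_i(2\tau-\sigma)|+\int_{2\tau}^t\Big(G(s-\tau)+\beta^{-1}e^{2\tau}G(s-\sigma)+\int_{s-\tau}^{s-\sigma}G(r-\tau)\,\mathrm dr\Big)\mathrm ds. \]
   Context: Let $N\ge2$, $d\ge1$ be integers, $[N]=\{1,\dots,N\}$, $0\le\sigma\le\tau$. Let $\psi:[0,\infty)\to[0,\infty)$ be continuous, nonincreasing, positive everywhere, with $\sup\psi\le1$. Given $x_i^0\in C^1([-\tau,0],\mathbb{R}^d)$, $v_i^0\in C([-\tau,0],\mathbb{R}^d)$ with $\frac{\mathrm d}{\mathrm dt}x_i^0=v_i^0$, $\{x_i,v_i\}$ is the global solution of $\dot x_i(t)=v_i(t)$, $\dot v_i(t)=\sum_{j\ne i}a_{ij}(t)(v_j(t-\tau)-v_i(t-\sigma))$ for $t>0$, with $a_{ij}(t)=\frac1{N-1}\psi(|x_i(t-\sigma)-x_j(t-\tau)|)$, and $x_i=x_i^0$, $v_i=v_i^0$ on $[-\tau,0]$ ($v_i$ continuously differentiable on $[0,\infty)$). $d_v(t):=\max_{i,j}|v_i(t)-v_j(t)|$.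 *)

(* Defs.v *)
From Stdlib Require Export Reals Lra List.
From Coquelicot Require Export Coquelicot.
Open Scope R_scope.

(* Agents are indexed by i in {0,...,N-1} (= [N] shifted), coordinates by
   k in {0,...,d-1}; a vector of R^d is a function nat -> R read on k < d. *)
Definition sumR (l : list nat) (f : nat -> R) : R :=
  fold_right (fun j acc => f j + acc) 0 l.
Definition maxR (l : list nat) (f : nat -> R) : R :=
  fold_right (fun j acc => Rmax (f j) acc) 0 l.

Definition enorm (d : nat) (u : nat -> R) : R :=
  sqrt (sumR (seq 0 d) (fun k => u k ^ 2)).

Definition dv (N d : nat) (v : nat -> R -> nat -> R) (t : R) : R :=
  maxR (seq 0 N) (fun i => maxR (seq 0 N)
    (fun j => enorm d (fun k => v i t k - v j t k))).

Definition vdot_max (N d : nat) (v : nat -> R -> nat -> R) (r : R) : R :=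
  maxR (seq 0 N) (fun i => enorm d (fun k => Derive (fun s => v i s k) r)).

Definition Gfun (N d : nat) (tau beta : R) (v : nat -> R -> nat -> R) (t : R) : R :=
  dv N d v t + beta * RInt (fun s => exp (- (t - s)) *
                              RInt (fun r => vdot_max N d v r) s t)
                           (Rmax 0 (t - 2 * tau)) t.

(* derivative of f at t relative to the set D (one-sided at endpoints) *)
Definition deriv_within (D : R -> Prop) (f : R -> R) (t l : R) : Prop :=
  filterlim (fun h => (f h - f t) / (h - t))
            (within (fun h => D h /\ h <> t) (locally t)) (locally l).

Definition cont_within (D : R -> Prop) (f : R -> R) (t : R) : Prop :=
  filterlim f (within D (locally t)) (locally (f t)).

Definition CS_rhs (N d : nat) (psi : R -> R) (sigma tau : R)
  (x v : nat -> R -> nat -> R) (i : nat) (t : R) (k : nat) : R :=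
  sumR (seq 0 N) (fun j => if Nat.eqb j i then 0 else
     / INR (N - 1) * psi (enorm d (fun m => x i (t - sigma) m - x j (t - tau) m))
       * (v j (t - tau) k - v i (t - sigma) k)).

(* Main.v *)
Require Import Defs.
From Stdlib Require Import Lia Psatz IndefiniteDescription.

Lemma cR_plus (f g : R -> R) x : continuous f x -> continuous g x -> continuous (fun t => f t + g t) x.
Proof. intros; apply (continuous_plus f g); auto. Qed.
Lemma cR_mult (f g : R -> R) x : continuous f x -> continuous g x -> continuous (fun t => f t * g t) x.
Proof. intros; apply (continuous_mult f g); auto. Qed.
Lemma cR_opp (f : R -> R) x : continuous f x -> continuous (fun t => - f t) x.
Proof. intros; apply (continuous_opp f); auto. Qed.
Lemma cR_minus (f g : R -> R) x : continuous f x -> continuous g x -> continuous (fun t => f t - g t) x.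
Proof. intros; apply cR_plus; auto; apply cR_opp; auto. Qed.
Lemma cR_const (c : R) x : continuous (fun _ : R => c) x.
Proof. apply continuous_const. Qed.
Lemma cR_id x : continuous (fun t : R => t) x.
Proof. apply continuous_id. Qed.
Lemma cR_comp (f g : R -> R) x : continuous f x -> continuous g (f x) -> continuous (fun t => g (f t)) x.
Proof. intros; apply (continuous_comp f g); auto. Qed.
Lemma cR_ext (f g : R -> R) x : (forall t, f t = g t) -> continuous f x -> continuous g x.
Proof. intros H; apply continuous_ext; exact H. Qed.
Lemma cR_pow2 (f : R -> R) x : continuous f x -> continuous (fun t => f t ^ 2) x.
Proof. intros. apply cR_ext with (fun t => f t * f t). intros; ring. apply cR_mult; auto. Qed.
Lemma Rmax_form a b : Rmax a b = (a + b + Rabs (a - b)) / 2.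
Proof. unfold Rmax; destruct (Rle_dec a b); [rewrite Rabs_left1 by lra | rewrite Rabs_right by lra]; lra. Qed.
Lemma cR_max (f g : R -> R) x : continuous f x -> continuous g x -> continuous (fun t => Rmax (f t) (g t)) x.
Proof. intros. apply cR_ext with (fun t => (f t + g t + Rabs (f t - g t)) * /2).
 intros; rewrite Rmax_form; reflexivity.
 apply cR_mult; [|apply cR_const]. apply cR_plus; [apply cR_plus; auto|].
 apply continuous_Rabs_comp. apply cR_minus; auto. Qed.
Lemma cR_sumR (l : list nat) (f : nat -> R -> R) x : (forall j, In j l -> continuous (f j) x) -> continuous (fun t => sumR l (fun j => f j t)) x.
Proof. intros H; induction l; simpl. apply cR_const. apply cR_plus; auto. apply H; simpl; auto. apply IHl; intros; apply H; simpl; auto. Qed.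
Lemma cR_maxR (l : list nat) (f : nat -> R -> R) x : (forall j, In j l -> continuous (f j) x) -> continuous (fun t => maxR l (fun j => f j t)) x.
Proof. intros H; induction l; simpl. apply cR_const. apply cR_max; auto. apply H; simpl; auto. apply IHl; intros; apply H; simpl; auto. Qed.
Lemma cR_enorm d (u : R -> nat -> R) x : (forall k, (k < d)%nat -> continuous (fun t => u t k) x) -> continuous (fun t => enorm d (u t)) x.
Proof. intros H; unfold enorm. apply continuous_sqrt_comp. apply (cR_sumR _ (fun k t => u t k ^ 2)). intros j Hj; apply in_seq in Hj; apply cR_pow2; apply H; lia. Qed.

Lemma sumR_ext l f g : (forall j, In j l -> f j = g j) -> sumR l f = sumR l g.
Proof. induction l; simpl; intros; auto. rewrite H, IHl; auto. Qed.
Lemma maxR_ext l f g : (forall j, In j l -> f j = g j) -> maxR l f = maxR l g.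
Proof. induction l; simpl; intros; auto. rewrite H, IHl; auto. Qed.
Lemma maxR_nonneg l f : 0 <= maxR l f.
Proof. induction l; simpl. lra. eapply Rle_trans; [|apply Rmax_r]; auto. Qed.
Lemma maxR_ge l f j : In j l -> f j <= maxR l f.
Proof. induction l; simpl; intros H. tauto. destruct H. subst; apply Rmax_l.
 eapply Rle_trans; [|apply Rmax_r]; auto. Qed.
Lemma maxR_le l f c : 0 <= c -> (forall j, In j l -> f j <= c) -> maxR l f <= c.
Proof. induction l; simpl; intros. auto. apply Rmax_lub; auto. Qed.
Lemma sumR_le l f g : (forall j, In j l -> f j <= g j) -> sumR l f <= sumR l g.
Proof. induction l; simpl; intros. lra. apply Rplus_le_compat; auto. Qed.
Lemma sumR_plus l f g : sumR l (fun k => f k + g k) = sumR l f + sumR l g.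
Proof. induction l; simpl; intros. lra. rewrite IHl; ring. Qed.
Lemma sumR_scal l c f : sumR l (fun k => c * f k) = c * sumR l f.
Proof. induction l; simpl; intros. lra. rewrite IHl; ring. Qed.
Lemma sumR_nonneg l f : (forall j, In j l -> 0 <= f j) -> 0 <= sumR l f.
Proof. induction l; simpl; intros. lra. apply Rplus_le_le_0_compat; auto. Qed.
Lemma sumR_cons a l f : sumR (a :: l) f = f a + sumR l f.
Proof. reflexivity. Qed.
Lemma sumR_app l1 l2 f : sumR (l1 ++ l2) f = sumR l1 f + sumR l2 f.
Proof. induction l1; simpl. ring. rewrite IHl1; ring. Qed.
Lemma sumR_count N i c : (i < N)%nat ->
  sumR (seq 0 N) (fun j => if Nat.eqb j i then 0 else c) = INR (N - 1) * c.
Proof.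
  assert (G: forall M, sumR (seq 0 M) (fun j => if Nat.eqb j i then 0 else c) =
     INR M * c - (if Nat.ltb i M then c else 0)).
  { induction M. simpl. ring. rewrite seq_S, sumR_app, IHM, S_INR. simpl.
    destruct (Nat.eqb_spec M i); destruct (Nat.ltb_spec i M); destruct (Nat.ltb_spec i (S M)); try lia; ring. }
  intros H. rewrite G. destruct (Nat.ltb_spec i N); try lia. rewrite minus_INR by lia. simpl; ring. Qed.

Lemma enorm_nonneg d u : 0 <= enorm d u.
Proof. apply sqrt_pos. Qed.
Lemma enorm_ext d u w : (forall k, (k < d)%nat -> u k = w k) -> enorm d u = enorm d w.
Proof. intros; unfold enorm; f_equal; apply sumR_ext. intros k Hk; apply in_seq in Hk. rewrite H; auto; lia. Qed.
Lemma enorm_sym d a b : enorm d (fun k => a k - b k) = enorm d (fun k => b k - a k).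
Proof. unfold enorm; f_equal; apply sumR_ext; intros; ring. Qed.
Lemma sumsq_nonneg l (a : nat -> R) : 0 <= sumR l (fun k => a k ^ 2).
Proof. apply sumR_nonneg; intros; nra. Qed.
Lemma CS_sq l a b : (sumR l (fun k => a k * b k))^2 <= sumR l (fun k => a k ^ 2) * sumR l (fun k => b k ^ 2).
Proof.
  induction l. simpl; lra. rewrite !sumR_cons.
  set (S := sumR l (fun k => a k * b k)) in *.
  set (A := sumR l (fun k => a k ^ 2)) in *.
  set (B := sumR l (fun k => b k ^ 2)) in *.
  assert (HA: 0 <= A) by apply sumsq_nonneg. assert (HB: 0 <= B) by apply sumsq_nonneg.
  set (al := sqrt A). set (be := sqrt B).
  assert (Hal: 0 <= al) by apply sqrt_pos. assert (Hbe: 0 <= be) by apply sqrt_pos.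
  assert (EA: A = al^2) by (unfold al; rewrite pow2_sqrt; auto).
  assert (EB: B = be^2) by (unfold be; rewrite pow2_sqrt; auto).
  rewrite EA, EB in *.
  assert (HS: Rabs S <= al * be).
  { destruct (Rle_or_lt (Rabs S) (al*be)); auto. exfalso.
    assert (Rabs S ^2 = S^2) by apply pow2_abs. assert (0 <= al*be) by nra. nra. }
  assert (Hab: S * (a a0 * b a0) <= al*be*Rabs (a a0 * b a0)).
  { eapply Rle_trans; [apply Rle_abs|]. rewrite Rabs_mult. apply Rmult_le_compat_r; auto. apply Rabs_pos. }
  assert (Hq: 2 * (al*be) * Rabs (a a0 * b a0) <= (al * b a0)^2 + (a a0 * be)^2).
  { rewrite Rabs_mult. 
    assert (0 <= (al * Rabs (b a0) - Rabs (a a0) * be)^2) by apply pow2_ge_0.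
    assert (Rabs (b a0) ^2 = b a0 ^2) by (apply pow2_abs).
    assert (Rabs (a a0) ^2 = a a0 ^2) by (apply pow2_abs). nra. }
  nra.
Qed.

Lemma CS d a b : sumR (seq 0 d) (fun k => a k * b k) <= enorm d a * enorm d b.
Proof.
  unfold enorm. rewrite <- sqrt_mult_alt by apply sumsq_nonneg.
  eapply Rle_trans; [apply Rle_abs|].
  rewrite <- sqrt_pow2 with (x := Rabs _) by apply Rabs_pos.
  apply sqrt_le_1_alt. rewrite pow2_abs. apply CS_sq.
Qed.

Lemma enorm_sq d a : enorm d a ^ 2 = sumR (seq 0 d) (fun k => a k ^ 2).
Proof. unfold enorm. rewrite pow2_sqrt; auto. apply sumsq_nonneg. Qed.

Lemma enorm_le_sq d a c : 0 <= c -> enorm d a ^ 2 <= c ^ 2 -> enorm d a <= c.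
Proof. intros. pose proof (enorm_nonneg d a). nra. Qed.

Lemma Mink d a b : enorm d (fun k => a k + b k) <= enorm d a + enorm d b.
Proof.
  apply enorm_le_sq. pose proof (enorm_nonneg d a); pose proof (enorm_nonneg d b); lra.
  rewrite enorm_sq.
  replace (sumR (seq 0 d) (fun k => (a k + b k)^2)) with
    (sumR (seq 0 d) (fun k => a k ^2) + 2 * sumR (seq 0 d) (fun k => a k * b k) + sumR (seq 0 d) (fun k => b k ^ 2)).
  rewrite <- !enorm_sq. pose proof (CS d a b). nra.
  rewrite <- sumR_scal, <- !sumR_plus. apply sumR_ext; intros; ring.
Qed.

Lemma enorm_scal d c a : enorm d (fun k => c * a k) = Rabs c * enorm d a.
Proof.
  unfold enorm. rewrite <- sqrt_pow2 with (x := Rabs c) by apply Rabs_pos.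
  rewrite <- sqrt_mult_alt by (apply pow2_ge_0). f_equal.
  rewrite pow2_abs, <- sumR_scal. apply sumR_ext; intros; ring.
Qed.

Lemma enorm_zero d : enorm d (fun _ => 0) = 0.
Proof. unfold enorm. replace (sumR (seq 0 d) (fun _ => 0 ^ 2)) with 0. apply sqrt_0. induction (seq 0 d) as [|a l IH]; [reflexivity| rewrite sumR_cons, <- IH; ring]. Qed.

Lemma enorm_sum d (l : list nat) (u : nat -> nat -> R) :
  enorm d (fun k => sumR l (fun j => u j k)) <= sumR l (fun j => enorm d (u j)).
Proof.
  induction l; simpl. rewrite enorm_zero; lra.
  eapply Rle_trans; [apply (Mink d (u a) (fun k => sumR l (fun j => u j k)))|]. lra.
Qed.

Lemma enorm_tri d a b c : enorm d (fun k => a k - c k) <= enorm d (fun k => a k - b k) + enorm d (fun k => b k - c k).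
Proof.
  eapply Rle_trans; [|apply Mink]. right. apply enorm_ext; intros; ring.
Qed.

Lemma ball_R (t e y : R) : Rabs (y - t) < e -> @ball R_UniformSpace t e y.
Proof. intros H. exact H. Qed.
Lemma ball_R' (t e y : R) : @ball R_UniformSpace t e y -> Rabs (y - t) < e.
Proof. intros H. exact H. Qed.

Lemma deriv_within_int D f t l d0 : 0 < d0 -> (forall y, Rabs (y - t) < d0 -> D y) ->
  deriv_within D f t l -> is_derive f t l.
Proof.
  intros Hd HD H. apply is_derive_Reals. intros eps He.
  assert (Hb : locally l (fun y => Rabs (y - l) < eps)).
  { exists (mkposreal eps He). intros y Hy. apply ball_R'. exact Hy. }
  specialize (H _ Hb). destruct H as [δ Hδ].
  assert (Hm: 0 < Rmin δ d0) by (apply Rmin_pos; [apply cond_pos|auto]).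
  exists (mkposreal _ Hm). intros h Hh0 Hh. simpl in Hh.
  assert (B: Rabs (t + h - t) < δ) by (replace (t+h-t) with h by ring; eapply Rlt_le_trans; [exact Hh| apply Rmin_l]).
  specialize (Hδ (t+h) (ball_R _ _ _ B)). simpl in Hδ.
  replace (t+h-t) with h in Hδ by ring. apply Hδ. split.
  apply HD. replace (t+h-t) with h by ring. eapply Rlt_le_trans; [exact Hh| apply Rmin_r].
  intro E. apply Hh0. lra.
Qed.

Lemma cont_within_int D f t d0 : 0 < d0 -> (forall y, Rabs (y - t) < d0 -> D y) ->
  cont_within D f t -> continuous f t.
Proof.
  intros Hd HD H P HP. specialize (H P HP). destruct H as [δ Hδ].
  assert (Hm: 0 < Rmin δ d0) by (apply Rmin_pos; [apply cond_pos|auto]).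
  exists (mkposreal _ Hm). intros y Hy. apply ball_R' in Hy. simpl in Hy.
  apply Hδ. apply ball_R. eapply Rlt_le_trans; [exact Hy| apply Rmin_l].
  apply HD. eapply Rlt_le_trans; [exact Hy| apply Rmin_r].
Qed.

Lemma cont_Rmax a s : continuous (fun y => Rmax a y) s.
Proof. apply cR_max; [apply cR_const|apply cR_id]. Qed.

Lemma cont_within_max a (g : R -> R) s : cont_within (fun u => a <= u) g (Rmax a s) ->
  continuous (fun y => g (Rmax a y)) s.
Proof.
  intros H P HP. specialize (H P HP).
  pose proof (cont_Rmax a s _ H) as H1. simpl in H1.
  destruct H1 as [e He]. exists e. intros y Hy. apply (He y Hy). apply Rmax_l.
Qed.

Definition extf (a : R) (f g : R -> R) (s : R) : R :=
  if Rle_dec a s then f s else f a + g a * (s - a).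

Lemma extf_eq a f g s : a <= s -> extf a f g s = f s.
Proof. intros; unfold extf; destruct (Rle_dec a s); tauto. Qed.

Lemma extf_deriv a (f g : R -> R) :
  (forall t, a <= t -> deriv_within (fun u => a <= u) f t (g t)) ->
  forall s, is_derive (extf a f g) s (g (Rmax a s)).
Proof.
  intros H s. destruct (Rlt_or_le a s) as [Hs|Hs].
  - rewrite Rmax_right by lra.
    apply is_derive_ext_loc with f.
    + exists (mkposreal (s - a) ltac:(lra)). intros y Hy. apply ball_R' in Hy. simpl in Hy.
      rewrite extf_eq; auto. apply Rabs_lt_between in Hy; lra.
    + apply (deriv_within_int (fun u => a <= u) f s (g s) (s - a)); try lra.
      intros y Hy; apply Rabs_lt_between in Hy; lra. apply H; lra.
  - rewrite Rmax_left by lra. destruct Hs as [Hs|Hs].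
    + apply is_derive_ext_loc with (fun y => f a + g a * (y - a)).
      * exists (mkposreal (a - s) ltac:(lra)). intros y Hy. apply ball_R' in Hy. simpl in Hy.
        unfold extf. destruct (Rle_dec a y); auto. apply Rabs_lt_between in Hy; lra.
      * auto_derive; auto. ring.
    + subst s. apply is_derive_Reals. intros eps He.
      specialize (H a (Rle_refl a)).
      assert (Hb : locally (g a) (fun y => Rabs (y - g a) < eps)).
      { exists (mkposreal eps He). intros y Hy. apply ball_R'. exact Hy. }
      specialize (H _ Hb). destruct H as [δ Hδ].
      exists δ. intros h Hh0 Hh.
      unfold extf. destruct (Rle_dec a a); [|lra]. destruct (Rle_dec a (a+h)).
      * assert (B: Rabs (a + h - a) < δ) by (replace (a+h-a) with h by ring; exact Hh).
        specialize (Hδ (a+h) (ball_R _ _ _ B)). simpl in Hδ.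
        replace (a+h-a) with h in Hδ by ring. apply Hδ. split. auto. intro E; apply Hh0; lra.
      * replace ((f a + g a * (a + h - a) - f a) / h - g a) with 0.
        rewrite Rabs_R0; auto. field; auto.
Qed.

Lemma RInt_scalR (f : R -> R) a b c : ex_RInt f a b -> RInt (fun x => c * f x) a b = c * RInt f a b.
Proof. intros H. apply (RInt_scal f a b c H). Qed.
Lemma RInt_plusR (f g : R -> R) a b : ex_RInt f a b -> ex_RInt g a b -> RInt (fun x => f x + g x) a b = RInt f a b + RInt g a b.
Proof. intros H1 H2. apply (RInt_plus f g a b H1 H2). Qed.
Lemma RInt_minusR (f g : R -> R) a b : ex_RInt f a b -> ex_RInt g a b -> RInt (fun x => f x - g x) a b = RInt f a b - RInt g a b.
Proof. intros H1 H2. apply (RInt_minus f g a b H1 H2). Qed.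
Lemma RInt_ChaslesR (f : R -> R) a b c : ex_RInt f a b -> ex_RInt f b c -> RInt f a b + RInt f b c = RInt f a c.
Proof. intros H1 H2. apply (RInt_Chasles f a b c H1 H2). Qed.
Lemma exRc (f : R -> R) a b : (forall s, continuous f s) -> ex_RInt f a b.
Proof. intros H; apply (ex_RInt_continuous (V:=R_CompleteNormedModule) f); intros; apply H. Qed.

Lemma sumR_minus l f g : sumR l f - sumR l g = sumR l (fun k => f k - g k).
Proof. induction l; simpl. ring. rewrite <- IHl; ring. Qed.

Lemma is_derive_sumR l (D : nat -> R) (F F' : nat -> R -> R) s :
  (forall k, In k l -> is_derive (F k) s (F' k s)) ->
  is_derive (fun t => sumR l (fun k => D k * F k t)) s (sumR l (fun k => D k * F' k s)).
Proof.
  intros H. induction l; simpl.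
  - apply (is_derive_const 0).
  - apply (is_derive_plus (fun t => D a * F a t) (fun t => sumR l (fun k => D k * F k t))); auto.
    apply is_derive_scal; auto. apply H; simpl; auto. apply IHl; intros; apply H; simpl; auto.
Qed.

Lemma ftc_norm d (F F' : nat -> R -> R) a b : a <= b ->
  (forall k s, (k < d)%nat -> is_derive (F k) s (F' k s)) -> (forall k s, (k < d)%nat -> continuous (F' k) s) ->
  enorm d (fun k => F k b - F k a) <= RInt (fun s => enorm d (fun k => F' k s)) a b.
Proof.
  intros Hab Hd Hc.
  set (Dk k := F k b - F k a).
  assert (Hi: is_RInt (fun s => sumR (seq 0 d) (fun k => Dk k * F' k s)) a b
     (sumR (seq 0 d) (fun k => Dk k * F k b) - sumR (seq 0 d) (fun k => Dk k * F k a))).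
  { apply (is_RInt_derive (fun t => sumR (seq 0 d) (fun k => Dk k * F k t))).
    intros; apply is_derive_sumR; intros k Hk; apply in_seq in Hk; apply Hd; lia.
    intros; apply (cR_sumR _ (fun k s => Dk k * F' k s)). intros k Hk; apply in_seq in Hk; apply cR_mult. apply cR_const. apply Hc; lia. }
  rewrite sumR_minus in Hi.
  assert (E: sumR (seq 0 d) (fun k => Dk k * F k b - Dk k * F k a) = enorm d Dk ^ 2).
  { rewrite enorm_sq. apply sumR_ext. intros; unfold Dk; ring. }
  rewrite E in Hi.
  assert (Hex: ex_RInt (fun s => enorm d (fun k => F' k s)) a b).
  { apply exRc. intros; apply cR_enorm. intros; apply Hc; auto. }
  assert (HI0: 0 <= RInt (fun s => enorm d (fun k => F' k s)) a b).
  { apply RInt_ge_0; auto. intros; apply enorm_nonneg. }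
  assert (Hle: enorm d Dk ^ 2 <= enorm d Dk * RInt (fun s => enorm d (fun k => F' k s)) a b).
  { rewrite <- (is_RInt_unique _ _ _ _ Hi). rewrite <- RInt_scalR by auto.
    apply RInt_le; auto. eexists; eauto.
    apply ex_RInt_scal with (k := enorm d Dk) in Hex. exact Hex.
    intros; apply CS. }
  pose proof (enorm_nonneg d Dk). change (enorm d Dk <= RInt (fun s => enorm d (fun k => F' k s)) a b). nra.
Qed.

Lemma cont_RInt0 (g : R -> R) : (forall s, continuous g s) -> forall u, continuous (fun u => RInt g 0 u) u.
Proof.
  intros H u. assert (E: ex_derive (fun u => RInt g 0 u) u).
  { exists (g u).
  apply (is_derive_RInt g (fun u => RInt g 0 u) 0 u); auto.
  apply filter_forall. intros y. exact (RInt_correct (V:=R_CompleteNormedModule) g 0 y (exRc g 0 y H)). }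
  apply ex_derive_continuous in E. exact E.
Qed.

Lemma RInt_diff (g : R -> R) a b : (forall s, continuous g s) -> RInt g a b = RInt g 0 b - RInt g 0 a.
Proof. intros H. rewrite <- (RInt_ChaslesR g 0 a b); try apply exRc; auto.
  unfold plus; simpl. lra. Qed.

Lemma RInt_extR (f g : R -> R) a b : (forall x, Rmin a b < x < Rmax a b -> f x = g x) -> @eq R (RInt f a b) (RInt g a b).
Proof. intros H. apply (RInt_ext f g a b H). Qed.

Definition Gform (tau beta : R) (Dv Mc : R -> R) (u : R) : R :=
  Dv u + beta * RInt (fun s => exp (- (u - s)) * RInt Mc s u) (Rmax 0 (u - 2 * tau)) u.

Lemma cexp s : continuous exp s.
Proof. apply continuous_exp. Qed.

Lemma inner_closed (Mc : R -> R) : (forall s, continuous Mc s) -> forall u a,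
  RInt (fun s => exp (- (u - s)) * RInt Mc s u) a u =
  exp (-u) * (RInt Mc 0 u * (RInt exp 0 u - RInt exp 0 a)
     - (RInt (fun s => exp s * RInt Mc 0 s) 0 u - RInt (fun s => exp s * RInt Mc 0 s) 0 a)).
Proof.
  intros HM u a.
  assert (HP: forall s, continuous (fun s => RInt Mc 0 s) s) by (apply cont_RInt0; auto).
  assert (HQ: forall s, continuous (fun s => exp s * RInt Mc 0 s) s) by (intros; apply cR_mult; auto; apply cexp).
  rewrite RInt_extR with (g := fun s => exp (-u) * (RInt Mc 0 u * exp s - exp s * RInt Mc 0 s)).
  2:{ intros s _. rewrite (RInt_diff Mc s u HM). replace (-(u-s)) with (-u + s) by ring; rewrite exp_plus; ring. }
  rewrite RInt_scalR. rewrite RInt_minusR, RInt_scalR.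
  rewrite (RInt_diff exp a u cexp), (RInt_diff (fun x : R => exp x * RInt Mc 0 x) a u HQ). reflexivity.
  all: try apply exRc; auto; intros; try apply cexp.
  all: try (apply cR_mult; [apply cR_const| apply cexp]).
  apply cR_minus; auto. apply cR_mult; [apply cR_const| apply cexp].
Qed.

Lemma Gform_cont tau beta Dv Mc : (forall s, continuous Dv s) -> (forall s, continuous Mc s) ->
  forall u, continuous (Gform tau beta Dv Mc) u.
Proof.
  intros HD HM u.
  assert (HP: forall s, continuous (fun s => RInt Mc 0 s) s) by (apply cont_RInt0; auto).
  assert (HQ: forall s, continuous (fun s => exp s * RInt Mc 0 s) s) by (intros; apply cR_mult; auto; apply cexp).
  assert (HE: forall s, continuous (fun s => RInt exp 0 s) s) by (apply cont_RInt0; apply cexp).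
  assert (HQ': forall s, continuous (fun s => RInt (fun s => exp s * RInt Mc 0 s) 0 s) s) by (apply cont_RInt0; auto).
  assert (Ha: continuous (fun u => Rmax 0 (u - 2 * tau)) u).
  { apply cR_max. apply cR_const. apply cR_minus. apply cR_id. apply cR_const. }
  apply cR_ext with (fun u => Dv u + beta * (exp (-u) * (RInt Mc 0 u * (RInt exp 0 u - RInt exp 0 (Rmax 0 (u - 2 * tau)))
     - (RInt (fun s => exp s * RInt Mc 0 s) 0 u - RInt (fun s => exp s * RInt Mc 0 s) 0 (Rmax 0 (u - 2 * tau)))))).
  { intros t. unfold Gform. rewrite inner_closed; auto. }
  apply cR_plus; auto. apply cR_mult; [apply cR_const|]. apply cR_mult.
  apply continuous_exp_comp. apply cR_opp, cR_id.
  apply cR_minus. apply cR_mult; auto. apply cR_minus; auto.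
  apply (cR_comp (fun u => Rmax 0 (u - 2 * tau)) (fun s => RInt exp 0 s)); auto.
  apply cR_minus; auto.
  apply (cR_comp (fun u => Rmax 0 (u - 2 * tau)) (fun s => RInt (fun s => exp s * RInt Mc 0 s) 0 s)); auto.
Qed.

Lemma Kcont (Mc : R -> R) u : (forall r, continuous Mc r) -> forall s0, continuous (fun s => exp (- (u - s)) * RInt Mc s u) s0.
Proof.
  intros HM s0. apply cR_ext with (fun s => exp (- (u - s)) * (RInt Mc 0 u - RInt Mc 0 s)).
  intros s. rewrite (RInt_diff Mc s u HM). reflexivity.
  apply cR_mult. apply continuous_exp_comp. apply cR_opp, cR_minus; [apply cR_const|apply cR_id].
  apply cR_minus. apply cR_const. apply cont_RInt0; auto.
Qed.

Lemma RInt_Mc_nonneg (Mc : R -> R) a b : (forall r, continuous Mc r) -> (forall r, 0 <= Mc r) -> a <= b -> 0 <= RInt Mc a b.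
Proof. intros. apply RInt_ge_0; auto. apply exRc; auto. Qed.

Lemma I_nonneg tau (Mc : R -> R) u : 0 <= tau -> 0 <= u -> (forall r, continuous Mc r) -> (forall r, 0 <= Mc r) ->
  0 <= RInt (fun s => exp (- (u - s)) * RInt Mc s u) (Rmax 0 (u - 2 * tau)) u.
Proof.
  intros Ht Hu HM HM0. apply RInt_ge_0. apply Rmax_lub; lra. apply exRc; apply Kcont; auto.
  intros s Hs. apply Rmult_le_pos. left; apply exp_pos. apply RInt_Mc_nonneg; auto; lra.
Qed.

Lemma Gform_ge tau beta (Dv Mc : R -> R) u : 0 <= tau -> 0 <= u -> 0 < beta -> (forall r, continuous Mc r) -> (forall r, 0 <= Mc r) ->
  Dv u <= Gform tau beta Dv Mc u.
Proof.
  intros. unfold Gform. pose proof (I_nonneg tau Mc u H H0 H2 H3). nra.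
Qed.

Lemma Lbound tau sigma beta (Dv Mc : R -> R) s : 0 <= sigma -> sigma <= tau -> 0 < beta ->
  (forall r, continuous Mc r) -> (forall r, 0 <= Mc r) -> (forall r, 0 <= Dv r) -> 2 * tau <= s ->
  RInt (fun r => RInt Mc (r - tau) (r - sigma)) (s - tau) (s - sigma)
   <= / beta * exp (2 * tau) * Gform tau beta Dv Mc (s - sigma).
Proof.
  intros Hs0 Hst Hb HM HM0 HD0 Hs.
  set (u := s - sigma). set (a := Rmax 0 (u - 2 * tau)).
  set (L := fun r => RInt Mc (r - tau) (r - sigma)).
  set (K := fun q => exp (2 * tau) * (exp (- (u - q)) * RInt Mc q u)).
  assert (HL: forall r, continuous L r).
  { intros r. apply cR_ext with (fun r => RInt Mc 0 (r - sigma) - RInt Mc 0 (r - tau)).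
    intros t; unfold L; rewrite (RInt_diff Mc (t - tau) (t - sigma) HM); reflexivity.
    apply cR_minus; apply (cR_comp (fun r => r - _) (fun s => RInt Mc 0 s)); try (apply cR_minus; [apply cR_id|apply cR_const]); apply cont_RInt0; auto. }
  assert (HK: forall q, continuous K q).
  { intros q. apply cR_mult. apply cR_const. apply Kcont; auto. }
  assert (HK0: forall q, q <= u -> 0 <= K q).
  { intros q Hq. unfold K. apply Rmult_le_pos. left; apply exp_pos. apply Rmult_le_pos. left; apply exp_pos.
    apply RInt_Mc_nonneg; auto. }
  assert (E1: RInt L (s - tau) u = RInt (fun q => L (q + tau)) (s - 2 * tau) (u - tau)).
  { transitivity (RInt (fun y => scal 1 (L (1 * y + tau))) (s - 2 * tau) (u - tau)).
    rewrite RInt_comp_lin. f_equal; ring. apply exRc; auto.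
    apply RInt_extR. intros q _. change (1 * L (1 * q + tau) = L (q + tau)). rewrite !Rmult_1_l. reflexivity. }
  assert (E2: RInt (fun q => L (q + tau)) (s - 2 * tau) (u - tau) <= RInt K (s - 2 * tau) (u - tau)).
  { apply RInt_le. unfold u; lra.
    apply exRc. intros q. apply (cR_comp (fun q => q + tau) L). apply cR_plus; [apply cR_id|apply cR_const]. auto.
    apply exRc; auto.
    intros q Hq. unfold L. replace (q + tau - tau) with q by ring.
    assert (Hm: RInt Mc q (q + tau - sigma) <= RInt Mc q u).
    { rewrite <- (RInt_ChaslesR Mc q (q + tau - sigma) u) by (apply exRc; auto).
      assert (0 <= RInt Mc (q + tau - sigma) u) by (apply RInt_Mc_nonneg; auto; unfold u in *; lra). lra. }
    eapply Rle_trans; [exact Hm|]. unfold K.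
    assert (0 <= RInt Mc q u) by (apply RInt_Mc_nonneg; auto; unfold u in *; lra).
    assert (1 <= exp (2 * tau) * exp (- (u - q))).
    { rewrite <- exp_plus. pose proof (exp_ineq1_le (2 * tau + - (u - q))). unfold u in *. lra. }
    nra. }
  assert (E3: RInt K (s - 2 * tau) (u - tau) <= RInt K a u).
  { assert (Ha: a <= s - 2 * tau) by (unfold a, u; apply Rmax_lub; lra).
    rewrite <- (RInt_ChaslesR K a (s - 2 * tau) u) by (apply exRc; auto).
    rewrite <- (RInt_ChaslesR K (s - 2 * tau) (u - tau) u) by (apply exRc; auto).
    assert (0 <= RInt K a (s - 2 * tau)).
    { apply RInt_ge_0; auto. apply exRc; auto. intros; apply HK0; unfold u in *; lra. }
    assert (0 <= RInt K (u - tau) u).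
    { apply RInt_ge_0. lra. apply exRc; auto. intros; apply HK0; lra. }
    lra. }
  assert (E4: RInt K a u = exp (2 * tau) * RInt (fun s => exp (- (u - s)) * RInt Mc s u) a u).
  { unfold K. apply RInt_scalR. apply exRc; apply Kcont; auto. }
  change (RInt L (s - tau) u <= / beta * exp (2 * tau) * Gform tau beta Dv Mc u).
  unfold Gform. fold a.
  assert (0 <= / beta * exp (2 * tau) * Dv u).
  { apply Rmult_le_pos; auto. apply Rmult_le_pos. left; apply Rinv_0_lt_compat; auto. left; apply exp_pos. }
  replace (/ beta * exp (2 * tau) * (Dv u + beta * RInt (fun s => exp (- (u - s)) * RInt Mc s u) a u))
    with (/ beta * exp (2 * tau) * Dv u + exp (2 * tau) * RInt (fun s => exp (- (u - s)) * RInt Mc s u) a u)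
    by (field; lra).
  lra.
Qed.

Lemma cs_bound N d psi sigma tau x v i r B : (2 <= N)%nat -> (i < N)%nat ->
  (forall r, 0 <= r -> 0 < psi r <= 1) ->
  (forall j, (j < N)%nat -> enorm d (fun k => v j (r - tau) k - v i (r - sigma) k) <= B) -> 0 <= B ->
  enorm d (fun k => CS_rhs N d psi sigma tau x v i r k) <= B.
Proof.
  intros HN Hi Hp HB HB0. unfold CS_rhs.
  eapply Rle_trans.
  apply (enorm_sum d (seq 0 N) (fun j k => if Nat.eqb j i then 0 else
     / INR (N - 1) * psi (enorm d (fun m => x i (r - sigma) m - x j (r - tau) m))
       * (v j (r - tau) k - v i (r - sigma) k))).
  assert (HN1: 0 < INR (N - 1)) by (apply lt_0_INR; lia).
  eapply Rle_trans. apply (sumR_le _ _ (fun j => if Nat.eqb j i then 0 else / INR (N - 1) * B)).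
  - intros j Hj. apply in_seq in Hj. destruct (Nat.eqb j i).
    + rewrite enorm_zero; lra.
    + rewrite enorm_scal. rewrite Rabs_right.
      2:{ apply Rle_ge, Rmult_le_pos. left; apply Rinv_0_lt_compat; auto. left; apply Hp, enorm_nonneg. }
      pose proof (Hp (enorm d (fun m => x i (r - sigma) m - x j (r - tau) m)) (enorm_nonneg _ _)).
      pose proof (HB j ltac:(lia)). pose proof (enorm_nonneg d (fun k => v j (r - tau) k - v i (r - sigma) k)).
      assert (0 < / INR (N - 1)) by (apply Rinv_0_lt_compat; auto).
      set (e := enorm d (fun k => v j (r - tau) k - v i (r - sigma) k)) in *.
      set (p := psi _) in *. clearbody p e. set (c := / INR (N - 1)) in *. clearbody c. assert (p * e <= B) by nra. nra.
  - rewrite sumR_count by auto. right. field. lra.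
Qed.

Lemma cshift (g : R -> R) c : (forall r, continuous g r) -> forall r, continuous (fun r => g (r - c)) r.
Proof. intros H r. apply (cR_comp (fun r => r - c) g). apply cR_minus; [apply cR_id|apply cR_const]. apply H. Qed.

Lemma Lcont (g : R -> R) a b : (forall r, continuous g r) -> forall r, continuous (fun r => RInt g (r - a) (r - b)) r.
Proof.
  intros H r. apply cR_ext with (fun r => RInt g 0 (r - b) - RInt g 0 (r - a)).
  intros t; rewrite (RInt_diff g (t - a) (t - b) H); reflexivity.
  apply cR_minus; apply (cshift (fun s => RInt g 0 s)); apply cont_RInt0; auto.
Qed.

Lemma is_derive_shift (f : R -> R) c s l : is_derive f (s - c) l -> is_derive (fun s => f (s - c)) s l.
Proof.
  intros H.
  assert (Hg: is_derive (fun s => s - c) s 1) by (auto_derive; auto; ring).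
  pose proof (is_derive_comp f (fun s => s - c) s l 1 H Hg) as X.
  assert (E: l = scal 1 l) by (unfold scal; simpl; unfold mult; simpl; lra). rewrite E. exact X.
Qed.

Lemma in_seq0 N j : In j (seq 0 N) <-> (j < N)%nat.
Proof. rewrite in_seq. lia. Qed.

Theorem lemma4p4 (N d : nat) (sigma tau beta : R) (psi : R -> R)
  (x v : nat -> R -> nat -> R) :
  (2 <= N)%nat -> (1 <= d)%nat -> 0 <= sigma -> sigma <= tau ->
  (forall r, 0 <= r -> cont_within (fun u => 0 <= u) psi r) ->
  (forall r1 r2, 0 <= r1 -> r1 <= r2 -> psi r2 <= psi r1) ->
  (forall r, 0 <= r -> 0 < psi r <= 1) ->
  (forall i k t, (i < N)%nat -> (k < d)%nat -> - tau <= t ->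
     deriv_within (fun u => - tau <= u) (fun s => x i s k) t (v i t k)) ->
  (forall i k t, (i < N)%nat -> (k < d)%nat -> - tau <= t ->
     cont_within (fun u => - tau <= u) (fun s => v i s k) t) ->
  (forall i k t, (i < N)%nat -> (k < d)%nat -> 0 < t ->
     is_derive (fun s => v i s k) t (CS_rhs N d psi sigma tau x v i t k)) ->
  (forall i k, (i < N)%nat -> (k < d)%nat ->
     exists w : R -> R, forall t, 0 <= t ->
       deriv_within (fun u => 0 <= u) (fun s => v i s k) t (w t) /\
       cont_within (fun u => 0 <= u) w t) ->
  0 < beta ->
  forall i j t, (i < N)%nat -> (j < N)%nat -> 2 * tau <= t ->
    enorm d (fun k => x j (t - tau) k - x i (t - sigma) k)
    <= enorm d (fun k => x j tau k - x i (2 * tau - sigma) k)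
       + RInt (fun s => Gfun N d tau beta v (s - tau)
                        + / beta * exp (2 * tau) * Gfun N d tau beta v (s - sigma)
                        + RInt (fun r => Gfun N d tau beta v (r - tau)) (s - tau) (s - sigma))
              (2 * tau) t.
Proof.
  intros HN Hd Hs0 Hst Hpc Hpm Hpp Hx Hvc Hode HC1 Hb i j t Hi Hj Ht.
  assert (Ht0: 0 <= tau) by lra.
  assert (HWex: exists W : nat -> nat -> R -> R, forall i k, (i < N)%nat -> (k < d)%nat -> forall t, 0 <= t ->
       deriv_within (fun u => 0 <= u) (fun s => v i s k) t (W i k t) /\
       cont_within (fun u => 0 <= u) (W i k) t).
  { assert (H': forall i k, exists w : R -> R, (i < N)%nat -> (k < d)%nat -> forall t, 0 <= t ->
       deriv_within (fun u => 0 <= u) (fun s => v i s k) t (w t) /\ cont_within (fun u => 0 <= u) w t).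
    { intros i0 k. destruct (Compare_dec.lt_dec i0 N) as [l1|l1]; destruct (Compare_dec.lt_dec k d) as [l2|l2].
      destruct (HC1 i0 k l1 l2) as [w Hw]; exists w; auto.
      all: exists (fun _ => 0); intros; lia. }
    exists (fun i k => proj1_sig (constructive_indefinite_description _ (H' i k))).
    intros i0 k Hi0 Hk. apply (proj2_sig (constructive_indefinite_description _ (H' i0 k))); auto. }
  destruct HWex as [W HW].
  set (vt := fun i s k => v i (Rmax (- tau) s) k).
  assert (Hvt: forall i s k, - tau <= s -> vt i s k = v i s k).
  { intros; unfold vt; rewrite Rmax_right; auto. }
  assert (Hvtc: forall i k s, (i < N)%nat -> (k < d)%nat -> continuous (fun s => vt i s k) s).
  { intros i0 k s Hi0 Hk. unfold vt. apply (cont_within_max (- tau) (fun s => v i0 s k) s).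
    apply Hvc; auto. apply Rmax_l. }
  set (Mc := fun r => maxR (seq 0 N) (fun i => enorm d (fun k => W i k (Rmax 0 r)))).
  assert (HMc: forall r, continuous Mc r).
  { intros r. apply (cR_maxR _ (fun i r => enorm d (fun k => W i k (Rmax 0 r)))).
    intros i0 Hi0; apply in_seq0 in Hi0. apply cR_enorm. intros k Hk.
    apply (cont_within_max 0 (W i0 k) r). apply HW; auto. apply Rmax_l. }
  assert (HMc0: forall r, 0 <= Mc r) by (intros; apply maxR_nonneg).
  set (Dv := fun u => dv N d vt u).
  assert (HDv: forall u, continuous Dv u).
  { intros u. unfold Dv, dv. apply (cR_maxR _ (fun a u => maxR (seq 0 N) (fun b => enorm d (fun k => vt a u k - vt b u k)))).
    intros a Ha; apply in_seq0 in Ha.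
    apply (cR_maxR _ (fun b u => enorm d (fun k => vt a u k - vt b u k))).
    intros b Hb'; apply in_seq0 in Hb'. apply cR_enorm. intros k Hk. apply cR_minus; apply Hvtc; auto. }
  assert (HDv0: forall u, 0 <= Dv u) by (intros; apply maxR_nonneg).
  assert (HDvge: forall u a b, (a < N)%nat -> (b < N)%nat -> enorm d (fun k => vt a u k - vt b u k) <= Dv u).
  { intros u a b Ha Hb'. unfold Dv, dv.
    eapply Rle_trans; [| apply (maxR_ge _ _ a); apply in_seq0; auto].
    apply (maxR_ge _ (fun b => enorm d (fun k => vt a u k - vt b u k)) b); apply in_seq0; auto. }
  set (Gt := Gform tau beta Dv Mc).
  assert (HGt: forall u, continuous Gt u) by (apply Gform_cont; auto).
  set (Vt := fun i k => extf 0 (fun s => v i s k) (W i k)).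
  assert (HVtd: forall i k s, (i < N)%nat -> (k < d)%nat -> is_derive (Vt i k) s (W i k (Rmax 0 s))).
  { intros. apply extf_deriv. intros; apply HW; auto. }
  assert (HVteq: forall i k s, 0 <= s -> Vt i k s = v i s k).
  { intros; unfold Vt; apply extf_eq; auto. }
  set (Xt := fun i k => extf (- tau) (fun s => x i s k) (fun s => v i s k)).
  assert (HXtd: forall i k s, (i < N)%nat -> (k < d)%nat -> is_derive (Xt i k) s (vt i s k)).
  { intros. apply extf_deriv. intros; apply Hx; auto. }
  assert (HXteq: forall i k s, - tau <= s -> Xt i k s = x i s k).
  { intros; unfold Xt; apply extf_eq; auto. }
  assert (HWeq: forall i k r, (i < N)%nat -> (k < d)%nat -> 0 < r -> W i k r = CS_rhs N d psi sigma tau x v i r k).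
  { intros i0 k r Hi0 Hk Hr.
    assert (D1: is_derive (fun s => v i0 s k) r (W i0 k r)).
    { apply (deriv_within_int (fun u => 0 <= u) _ r _ r); auto.
      intros y Hy; apply Rabs_lt_between in Hy; lra. apply HW; auto; lra. }
    apply is_derive_unique in D1. rewrite <- D1. apply is_derive_unique. apply Hode; auto. }
  assert (Hvdiff: forall i p u, (i < N)%nat -> 0 <= p -> p <= u -> enorm d (fun k => v i p k - v i u k) <= RInt Mc p u).
  { intros i0 p u Hi0 Hp Hpu. rewrite enorm_sym.
    rewrite (enorm_ext d _ (fun k => Vt i0 k u - Vt i0 k p)) by (intros; rewrite !HVteq; auto; lra).
    eapply Rle_trans. apply (ftc_norm d (Vt i0) (fun k s => W i0 k (Rmax 0 s))); auto.
    intros k s Hk. apply (cont_within_max 0 (W i0 k) s). apply HW; auto. apply Rmax_l.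
    apply RInt_le; auto. apply exRc. intros s. apply cR_enorm. intros k Hk.
    apply (cont_within_max 0 (W i0 k) s). apply HW; auto. apply Rmax_l.
    apply exRc; auto.
    intros s _. unfold Mc. apply (maxR_ge _ (fun i => enorm d (fun k => W i k (Rmax 0 s))) i0). apply in_seq0; auto. }
  assert (HMb: forall r, 0 < r -> tau <= r -> Mc r <= Dv (r - tau) + RInt Mc (r - tau) (r - sigma)).
  { intros r Hr Hrt. unfold Mc at 1. apply maxR_le.
    pose proof (RInt_Mc_nonneg Mc (r - tau) (r - sigma) HMc HMc0 ltac:(lra)). pose proof (HDv0 (r - tau)). lra.
    intros i0 Hi0; apply in_seq0 in Hi0.
    rewrite (enorm_ext d _ (fun k => CS_rhs N d psi sigma tau x v i0 r k)).
    2:{ intros k Hk. rewrite Rmax_right by lra. apply HWeq; auto. }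
    apply cs_bound; auto.
    2:{ pose proof (RInt_Mc_nonneg Mc (r - tau) (r - sigma) HMc HMc0 ltac:(lra)). pose proof (HDv0 (r - tau)). lra. }
    intros j0 Hj0. eapply Rle_trans. apply (enorm_tri d _ (fun k => v i0 (r - tau) k)).
    apply Rplus_le_compat.
    - rewrite (enorm_ext d _ (fun k => vt j0 (r - tau) k - vt i0 (r - tau) k)).
      apply HDvge; auto. intros; rewrite !Hvt; auto; lra.
    - apply Hvdiff; auto; lra. }
  assert (HGeq: forall u, 0 <= u -> Gfun N d tau beta v u = Gt u).
  { intros u Hu. unfold Gfun, Gt, Gform. f_equal.
    - unfold Dv, dv. apply maxR_ext; intros a Ha. apply maxR_ext; intros b Hb'.
      apply enorm_ext; intros k Hk. rewrite !Hvt; auto; lra.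
    - f_equal. assert (Hau: Rmax 0 (u - 2 * tau) <= u) by (apply Rmax_lub; lra).
      apply RInt_extR. intros s Hs. rewrite (Rmin_left (Rmax 0 (u - 2 * tau)) u), (Rmax_right (Rmax 0 (u - 2 * tau)) u) in Hs by lra.
      assert (Hs0': 0 <= Rmax 0 (u - 2 * tau)) by apply Rmax_l.
      f_equal. apply RInt_extR. intros r Hr. rewrite Rmin_left, Rmax_right in Hr by lra.
      unfold vdot_max, Mc. apply maxR_ext; intros i0 Hi0; apply in_seq0 in Hi0.
      apply enorm_ext; intros k Hk. rewrite Rmax_right by lra.
      apply is_derive_unique.
      apply (deriv_within_int (fun u => 0 <= u) _ r _ r); try lra.
      intros y Hy; apply Rabs_lt_between in Hy; lra. apply HW; auto; lra. }
  set (Ht' := fun s => Gt (s - tau) + / beta * exp (2 * tau) * Gt (s - sigma) + RInt (fun r => Gt (r - tau)) (s - tau) (s - sigma)).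
  assert (HHt: forall s, continuous Ht' s).
  { intros s. unfold Ht'. apply cR_plus. apply cR_plus. apply cshift; auto.
    apply cR_mult. apply cR_const. apply cshift; auto.
    apply (Lcont (fun r => Gt (r - tau))). apply cshift; auto. }
  assert (HB4: forall s, 2 * tau < s -> enorm d (fun k => vt j (s - tau) k - vt i (s - sigma) k) <= Ht' s).
  { intros s Hs.
    eapply Rle_trans. apply (enorm_tri d _ (fun k => vt i (s - tau) k)).
    assert (A1: enorm d (fun k => vt j (s - tau) k - vt i (s - tau) k) <= Dv (s - tau)) by (apply HDvge; auto).
    assert (A2: enorm d (fun k => vt i (s - tau) k - vt i (s - sigma) k) <= RInt Mc (s - tau) (s - sigma)).
    { rewrite (enorm_ext d _ (fun k => v i (s - tau) k - v i (s - sigma) k)) by (intros; rewrite !Hvt; auto; lra).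
      apply Hvdiff; auto; lra. }
    assert (HLc: forall r, continuous (fun r => RInt Mc (r - tau) (r - sigma)) r) by (apply Lcont; auto).
    assert (A3: RInt Mc (s - tau) (s - sigma) <= RInt (fun r => Dv (r - tau) + RInt Mc (r - tau) (r - sigma)) (s - tau) (s - sigma)).
    { apply RInt_le. lra. apply exRc; auto. apply exRc. intros; apply cR_plus; auto. apply cshift; auto.
      intros r Hr. apply HMb; lra. }
    rewrite RInt_plusR in A3. 2: apply exRc; apply cshift; auto. 2: apply exRc; auto.
    assert (A5: RInt (fun r => Dv (r - tau)) (s - tau) (s - sigma) <= RInt (fun r => Gt (r - tau)) (s - tau) (s - sigma)).
    { apply RInt_le. lra. apply exRc; apply cshift; auto. apply exRc; apply cshift; auto.
      intros r Hr. apply Gform_ge; auto; lra. }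
    assert (A6 := Lbound tau sigma beta Dv Mc s Hs0 Hst Hb HMc HMc0 HDv0 ltac:(lra)). fold Gt in A6.
    assert (A7: Dv (s - tau) <= Gt (s - tau)) by (apply Gform_ge; auto; lra).
    unfold Ht'. lra. }
  set (F := fun k s => Xt j k (s - tau) - Xt i k (s - sigma)).
  rewrite (enorm_ext d (fun k => x j (t - tau) k - x i (t - sigma) k) (fun k => F k (2 * tau) + (F k t - F k (2 * tau)))).
  2:{ intros k Hk. unfold F. rewrite !HXteq by lra. ring. }
  eapply Rle_trans. apply Mink. apply Rplus_le_compat.
  - right. apply enorm_ext. intros k Hk. unfold F. rewrite !HXteq by lra. replace (2 * tau - tau) with tau by ring. reflexivity.
  - eapply Rle_trans. apply (ftc_norm d F (fun k s => vt j (s - tau) k - vt i (s - sigma) k)). lra.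
    + intros k s Hk. unfold F.
      apply (is_derive_minus (fun s => Xt j k (s - tau)) (fun s => Xt i k (s - sigma))); apply is_derive_shift; apply HXtd; auto.
    + intros k s Hk. apply cR_minus; apply (cshift (fun s => vt _ s k)); intros; apply Hvtc; auto.
    + eapply Rle_trans. apply (RInt_le _ Ht'). lra.
      apply exRc. intros s. apply cR_enorm. intros k Hk. apply cR_minus; apply (cshift (fun s => vt _ s k)); intros; apply Hvtc; auto.
      apply exRc; auto.
      intros s Hs. apply HB4; lra.
      right. apply RInt_extR. intros s Hs. rewrite Rmin_left, Rmax_right in Hs by lra.
      unfold Ht'. rewrite !HGeq by lra. f_equal. apply RInt_extR. intros r Hr.
      rewrite Rmin_left, Rmax_right in Hr by lra. rewrite HGeq by lra. reflexivity.
Qed.
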